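(* In the coefficient-choosing game of degree $d = 3$ over $R = \mathbb{Z}/16\mathbb{Z}$, Wanda has a winning strategy irrespective of whether she is the first or the second player.
   Context: The coefficient-choosing game of degree $d$ over $R$: Nora and Wanda alternately choose coefficients of $f(x) = a_d x^d + \cdots + a_0$; on each move the current player picks a not-yet-chosen coefficient and assigns it a value in $R$, subject to $a_d \neq 0$, $a_0 \neq 0$. After all $d+1$ coefficients are chosen, Wanda wins if $f$ has a root in $R$, and Nora wins otherwise. *)

(* Defs.v *)
From mathcomp Require Import all_boot all_algebra.
Set Implicit Arguments. Unset Strict Implicit. Unset Printing Implicit Defensive.
Import GRing.Theory.
Local Open Scope ring_scope.

(* Coefficient-choosing game of degree d over a ring R.
   A position records, for each index i in {0,...,d}, either None
   (coefficient a_i not yet chosen) or Some v (a_i = v). *)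
Definition position (R : Type) (d : nat) := 'I_d.+1 -> option R.

Definition empty_pos (R : Type) (d : nat) : position R d := fun _ => None.

Definition legal_move (R : nzRingType) (d : nat) (p : position R d)
    (i : 'I_d.+1) (v : R) : Prop :=
  p i = None /\ ((val i = 0)%N \/ (val i = d) -> v <> 0).

Definition play (R : Type) (d : nat) (p : position R d)
    (i : 'I_d.+1) (v : R) : position R d :=
  fun j => if j == i then Some v else p j.

Definition pos_poly (R : nzRingType) (d : nat) (p : position R d) : {poly R} :=
  \poly_(i < d.+1) odflt 0 (p (inord i)).

Definition wanda_wins_final (R : nzRingType) (d : nat) (p : position R d) : Prop :=
  exists x : R, root (pos_poly p) x.

(* wanda_can_win k w p : with k moves remaining from position p,
   where w = true iff it is Wanda's turn, Wanda has a strategy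
   guaranteeing that the final polynomial has a root in R. *)
Fixpoint wanda_can_win (R : nzRingType) (d : nat) (k : nat) (w : bool)
    (p : position R d) : Prop :=
  match k with
  | 0 => wanda_wins_final p
  | k'.+1 =>
      if w then exists i v, legal_move p i v /\ @wanda_can_win R d k' false (play p i v)
      else forall i v, legal_move p i v -> @wanda_can_win R d k' true (play p i v)
  end.

Definition wanda_wins_as_first (R : nzRingType) (d : nat) : Prop :=
  @wanda_can_win R d d.+1 true (@empty_pos R d).
Definition wanda_wins_as_second (R : nzRingType) (d : nat) : Prop :=
  @wanda_can_win R d d.+1 false (@empty_pos R d).

(* Main.v *)
Require Import Defs.
From mathcomp Require Import all_boot all_algebra ring.
Import GRing.Theory.

Definition allZ : seq 'Z_16 := map (@inZp 15) (iota 0 16).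
Definition o0 : 'I_4 := @Ordinal 4 0 isT.
Definition o1 : 'I_4 := @Ordinal 4 1 isT.
Definition o2 : 'I_4 := @Ordinal 4 2 isT.
Definition o3 : 'I_4 := @Ordinal 4 3 isT.
Definition allI : seq 'I_4 := [:: o0; o1; o2; o3].
Definition cz (p : position 'Z_16 3) (i : 'I_4) : 'Z_16 := odflt 0%R (p i).
Definition evaln (p : position 'Z_16 3) (x : 'Z_16) : bool :=
  nat_of_ord (cz p o0 + x * (cz p o1 + x * (cz p o2 + x * cz p o3)))%R == 0.
Definition legal_b (p : position 'Z_16 3) (i : 'I_4) (v : 'Z_16) : bool :=
  (if p i is None then true else false) && (((val i == 0) || (val i == 3)) ==> (val v != 0)).
Definition play' (p : position 'Z_16 3) (i : 'I_4) (v : 'Z_16) : position 'Z_16 3 :=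
  fun j => if eqn (nat_of_ord j) (nat_of_ord i) then Some v else p j.
Fixpoint lhas {T} (a : T -> bool) (s : seq T) : bool :=
  if s is x :: s' then (if a x then true else lhas a s') else false.
Fixpoint lall {T} (a : T -> bool) (s : seq T) : bool :=
  if s is x :: s' then (if a x then lall a s' else false) else true.
Fixpoint wb (k : nat) (w : bool) (p : position 'Z_16 3) : bool :=
  match k with
  | 0 => lhas (evaln p) allZ
  | k'.+1 => if w then lhas (fun i => lhas (fun v => if legal_b p i v then wb k' false (play' p i v) else false) allZ) allI
             else lall (fun i => lall (fun v => if legal_b p i v then wb k' true (play' p i v) else true) allZ) allI
  end.

Lemma lhasE T (a : T -> bool) s : lhas a s = has a s.
Proof. by elim: s => //= x s ->; case: (a x). Qed.
Lemma lallE T (a : T -> bool) s : lall a s = all a s.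
Proof. by elim: s => //= x s ->; case: (a x). Qed.
Arguments lhas : simpl never.
Arguments lall : simpl never.
Lemma memZ (v : 'Z_16) : v \in allZ.
Proof.
apply/mapP; exists (nat_of_ord v); first by rewrite mem_iota /= add0n ltn_ord.
by apply: val_inj; rewrite /= modn_small // ltn_ord.
Qed.
Lemma memI (i : 'I_4) : i \in allI.
Proof. by case: i => [[|[|[|[|n]]]] H] //; vm_compute. Qed.

Lemma leaf (p p' : position 'Z_16 3) : (forall j, p j = p' j) ->
  lhas (evaln p') allZ -> wanda_wins_final p.
Proof.
move=> E; rewrite lhasE => /hasP [x _ Hx]; exists x.
rewrite /root /pos_poly horner_poly !big_ord_recr big_ord0 /=.
have e0 : p (inord 0) = p' o0 by rewrite E; congr p'; apply: val_inj; rewrite /= inordK.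
have e1 : p (inord 1) = p' o1 by rewrite E; congr p'; apply: val_inj; rewrite /= inordK.
have e2 : p (inord 2) = p' o2 by rewrite E; congr p'; apply: val_inj; rewrite /= inordK.
have e3 : p (inord 3) = p' o3 by rewrite E; congr p'; apply: val_inj; rewrite /= inordK.
rewrite e0 e1 e2 e3.
have H0 : (cz p' o0 + x * (cz p' o1 + x * (cz p' o2 + x * cz p' o3)))%R = 0%R.
  apply: val_inj; move: Hx; rewrite /evaln => /eqP; exact.
apply/eqP; rewrite -[X in _ = X]H0 /cz /=; ring.
Qed.

Lemma sound k : forall w (p p' : position 'Z_16 3), (forall j, p j = p' j) ->
  wb k w p' -> wanda_can_win k w p.
Proof.
elim: k => [|k IH] w p p' E /=; first exact: leaf.
have Eplay : forall i v j, play p i v j = play' p' i v j.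
  by move=> i v j; rewrite /play /play' E.
case: w.
- rewrite lhasE => /hasP [i _]; rewrite lhasE => /hasP [v _].
  case Hl: (legal_b p' i v) => // Hw.
  exists i, v; split; last exact: (IH _ _ _ (Eplay i v) Hw).
  move: Hl; rewrite /legal_b /legal_move E.
  case: (p' i) => // /= /implyP H; split => // Hi.
  have: (val i == 0) || (val i == 3) by case: Hi => Hi; apply/orP; [left|right]; apply/eqP.
  move/H => /eqP Hv Hv0; apply: Hv; by rewrite Hv0.
- rewrite lallE => /allP Hall i v [Hn Hv].
  move: (Hall i (memI i)); rewrite lallE => /allP /(_ v (memZ v)).
  have -> : legal_b p' i v.
    rewrite /legal_b -E Hn /=; apply/implyP => /orP [] /eqP Hi.
    + by apply/eqP => Hv0; apply: Hv; [left; exact Hi | apply: val_inj].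
    + by apply/eqP => Hv0; apply: Hv; [right; exact Hi | apply: val_inj].
  by move=> Hw; exact: (IH _ _ _ (Eplay i v) Hw).
Qed.

Lemma wb1 : wb 4 true (@empty_pos _ 3). Proof. vm_compute. reflexivity. Qed.
Lemma wb2 : wb 4 false (@empty_pos _ 3). Proof. vm_compute. reflexivity. Qed.

Theorem lemma9 :
  wanda_wins_as_first 'Z_16 3 /\ wanda_wins_as_second 'Z_16 3.
Proof.
split; [exact: (@sound 4 true _ (@empty_pos _ 3) (fun _ => erefl) wb1) | exact: (@sound 4 false _ (@empty_pos _ 3) (fun _ => erefl) wb2)].
Qed.
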